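(* Let $V_1,V_2$ be closed subspaces of a Hilbert space $\mathcal H$, neither of which contains the other, with $\angle(V_1,V_2)>0$. For $w\in\mathcal H$ let $w_0=P_{V_1\cap V_2}(w)$, $w_1=P_{V_1}(w)$, and let $d_i(w)$ be the distance from $w$ to $V_i$ ($i=1,2$). Then $\|w_1-w_0\|\le\dfrac{\cos\angle(V_1,V_2)\,d_1(w)+d_2(w)}{\sin\angle(V_1,V_2)}$.
   Context: $P_V$ denotes orthogonal projection onto a closed subspace $V$. For closed subspaces $V_1,V_2$ neither of which contains the other, the (Friederichs) angle $\angle(V_1,V_2)\in[0,\pi/2]$ is defined by $\cos\angle(V_1,V_2)=\sup\{|\langle v_1,v_2\rangle| : v_i\in V_i,\ \|v_i\|=1,\ v_i\perp V_1\cap V_2\}$. *)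

(* Defs.v *)
From HB Require Import structures.
From mathcomp Require Import all_boot all_order all_algebra.
From mathcomp Require Import all_classical all_reals all_analysis.
Set Implicit Arguments. Unset Strict Implicit. Unset Printing Implicit Defensive.
Import Order.TTheory GRing.Theory Num.Theory.
Import numFieldNormedType.Exports.
Local Open Scope classical_set_scope.
Local Open Scope ring_scope.

(* A real Hilbert space is a complete normed space H whose norm comes from
   an inner product [ip]: symmetric, bilinear, with ip x x = `|x|^2
   (positivity / definiteness then follow from the norm axioms). *)
Definition is_inner_product (R : realType) (H : completeNormedModType R)
    (ip : H -> H -> R) : Prop :=
  [/\ (forall x y, ip x y = ip y x),
      (forall a x y z, ip (a *: x + y) z = a * ip x z + ip y z)
    & (forall x, ip x x = `|x| ^+ 2)].

Definition closed_subspace (R : realType) (H : completeNormedModType R)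
    (V : set H) : Prop :=
  [/\ V 0, (forall a x y, V x -> V y -> V (a *: x + y)) & closed V].

Definition is_orth_proj (R : realType) (H : completeNormedModType R)
    (ip : H -> H -> R) (V : set H) (w p : H) : Prop :=
  V p /\ (forall v, V v -> ip (w - p) v = 0).

Definition dist_to (R : realType) (H : completeNormedModType R)
    (V : set H) (w : H) : R :=
  inf [set `|w - v| | v in V].

Definition orth_to (R : realType) (H : completeNormedModType R)
    (ip : H -> H -> R) (W : set H) (v : H) : Prop :=
  forall u, W u -> ip v u = 0.

Definition friedrichs_cos (R : realType) (H : completeNormedModType R)
    (ip : H -> H -> R) (V1 V2 : set H) : R :=
  sup [set r : R | exists v1 v2 : H,
         [/\ V1 v1 /\ `|v1| = 1 /\ orth_to ip (V1 `&` V2) v1,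
              V2 v2 /\ `|v2| = 1 /\ orth_to ip (V1 `&` V2) v2
            & r = `|ip v1 v2|]].

Definition friedrichs_angle (R : realType) (H : completeNormedModType R)
    (ip : H -> H -> R) (V1 V2 : set H) : R :=
  acos (friedrichs_cos ip V1 V2).

(* Main.v *)
Require Import Defs.
From HB Require Import structures.
From mathcomp Require Import all_boot all_order all_algebra.
From mathcomp Require Import all_classical all_reals all_analysis.
From mathcomp Require Import ring lra.
Import Order.TTheory GRing.Theory Num.Theory.
Import numFieldNormedType.Exports.
Local Open Scope classical_set_scope.
Local Open Scope ring_scope.
Set Implicit Arguments. Unset Strict Implicit.


Lemma ipDl (R : realType) (H : completeNormedModType R) (ip : H -> H -> R) :
  is_inner_product ip -> forall x y z, ip (x + y) z = ip x z + ip y z.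
Proof. by case=> _ L _ x y z; rewrite -[x in LHS]scale1r L mul1r. Qed.

Lemma ip0l (R : realType) (H : completeNormedModType R) (ip : H -> H -> R) :
  is_inner_product ip -> forall z, ip 0 z = 0.
Proof.
move=> hip z; have := ipDl hip 0 0 z; rewrite addr0 => h.
by apply/eqP; rewrite -(subrr (ip 0 z)) {2}h addrK.
Qed.

Lemma ipZl (R : realType) (H : completeNormedModType R) (ip : H -> H -> R) :
  is_inner_product ip -> forall a x z, ip (a *: x) z = a * ip x z.
Proof. move=> hip a x z; case: (hip) => _ L _. by rewrite -[a *: x]addr0 L ip0l // addr0. Qed.

Lemma ipNl (R : realType) (H : completeNormedModType R) (ip : H -> H -> R) :
  is_inner_product ip -> forall x z, ip (- x) z = - ip x z.
Proof. by move=> hip x z; rewrite -scaleN1r ipZl // mulN1r. Qed.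

Lemma ipBl (R : realType) (H : completeNormedModType R) (ip : H -> H -> R) :
  is_inner_product ip -> forall x y z, ip (x - y) z = ip x z - ip y z.
Proof. by move=> hip x y z; rewrite ipDl // ipNl. Qed.

Lemma ipC (R : realType) (H : completeNormedModType R) (ip : H -> H -> R) :
  is_inner_product ip -> forall x y, ip x y = ip y x.
Proof. by case. Qed.

Lemma ipDr (R : realType) (H : completeNormedModType R) (ip : H -> H -> R) :
  is_inner_product ip -> forall x y z, ip z (x + y) = ip z x + ip z y.
Proof. by move=> hip x y z; rewrite !(ipC hip z) ipDl. Qed.

Lemma ipZr (R : realType) (H : completeNormedModType R) (ip : H -> H -> R) :
  is_inner_product ip -> forall a x z, ip z (a *: x) = a * ip z x.
Proof. by move=> hip a x z; rewrite !(ipC hip z) ipZl. Qed.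

Lemma ipBr (R : realType) (H : completeNormedModType R) (ip : H -> H -> R) :
  is_inner_product ip -> forall x y z, ip z (x - y) = ip z x - ip z y.
Proof. by move=> hip x y z; rewrite !(ipC hip z) ipBl. Qed.

Lemma ipNr (R : realType) (H : completeNormedModType R) (ip : H -> H -> R) :
  is_inner_product ip -> forall x z, ip z (- x) = - ip z x.
Proof. by move=> hip x z; rewrite !(ipC hip z) ipNl. Qed.

Lemma ip0r (R : realType) (H : completeNormedModType R) (ip : H -> H -> R) :
  is_inner_product ip -> forall z, ip z 0 = 0.
Proof. by move=> hip z; rewrite ipC // ip0l. Qed.

Lemma ipxx (R : realType) (H : completeNormedModType R) (ip : H -> H -> R) :
  is_inner_product ip -> forall x, ip x x = `|x| ^+ 2.
Proof. by case. Qed.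

Lemma normD2 (R : realType) (H : completeNormedModType R) (ip : H -> H -> R) :
  is_inner_product ip -> forall x y, `|x + y| ^+ 2 = `|x| ^+ 2 + 2 * ip x y + `|y| ^+ 2.
Proof.
move=> hip x y; rewrite -!(ipxx hip) !(ipDl hip, ipDr hip) (ipC hip y x); lra.
Qed.

Lemma normB2 (R : realType) (H : completeNormedModType R) (ip : H -> H -> R) :
  is_inner_product ip -> forall x y, `|x - y| ^+ 2 = `|x| ^+ 2 - 2 * ip x y + `|y| ^+ 2.
Proof.
move=> hip x y; rewrite (normD2 hip) normrN (ipNr hip); lra.
Qed.

Lemma ip_le (R : realType) (H : completeNormedModType R) (ip : H -> H -> R) :
  is_inner_product ip -> forall x y, ip x y <= `|x| * `|y|.
Proof.
move=> hip x y.
have [->|x0] := eqVneq x 0; first by rewrite ip0l // normr0 mul0r.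
have [->|y0] := eqVneq y 0; first by rewrite ip0r // normr0 mulr0.
have h := normB2 hip (`|y| *: x) (`|x| *: y).
rewrite (ipZl hip) (ipZr hip) !normrZ !normr_id in h.
have hx : 0 < `|x| by rewrite normr_gt0.
have hy : 0 < `|y| by rewrite normr_gt0.
have hp : 0 <= `| `|y| *: x - `|x| *: y| ^+ 2 by rewrite sqr_ge0.
rewrite h in hp.
have : 0 <= `|x| * `|y| * (2 * (`|x| * `|y| - ip x y)).
  move: hp; rewrite !exprMn; set X := `|x|; set Y := `|y|; set I := ip x y.
  move=> hp; have -> : X * Y * (2 * (X * Y - I)) = Y ^+ 2 * X ^+ 2 - 2 * (Y * (X * I)) + X ^+ 2 * Y ^+ 2.
    by rewrite !expr2; ring.
  exact: hp.
rewrite pmulr_rge0 ?mulr_gt0 // pmulr_rge0 // subr_ge0 //.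
Qed.

Lemma CS (R : realType) (H : completeNormedModType R) (ip : H -> H -> R) :
  is_inner_product ip -> forall x y, `|ip x y| <= `|x| * `|y|.
Proof.
move=> hip x y; rewrite ler_norml ip_le // andbT lerNl -ipNl //.
by rewrite -[X in X * _]normrN ip_le.
Qed.

Lemma subZ (R : realType) (H : completeNormedModType R) (V : set H) :
  closed_subspace V -> forall a x, V x -> V (a *: x).
Proof. by case=> V0 L _ a x Vx; rewrite -[_ *: _]addr0; apply: L. Qed.

Lemma subD (R : realType) (H : completeNormedModType R) (V : set H) :
  closed_subspace V -> forall x y, V x -> V y -> V (x + y).
Proof. by case=> V0 L _ x y Vx Vy; rewrite -[x]scale1r; apply: L. Qed.

Lemma subB (R : realType) (H : completeNormedModType R) (V : set H) :
  closed_subspace V -> forall x y, V x -> V y -> V (x - y).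
Proof. by move=> hV x y Vx Vy; apply: subD => //; rewrite -scaleN1r; apply: subZ. Qed.

Lemma subI (R : realType) (H : completeNormedModType R) (V W : set H) :
  closed_subspace V -> closed_subspace W -> closed_subspace (V `&` W).
Proof.
move=> [V0 LV cV] [W0 LW cW]; split => //.
- by move=> a x y [? ?] [? ?]; split; [apply: LV|apply: LW].
- exact: closedI.
Qed.

Lemma proj_exists (R : realType) (H : completeNormedModType R) (ip : H -> H -> R)
  (M : set H) : is_inner_product ip -> closed_subspace M ->
  forall z, exists q, M q /\ forall m, M m -> ip (z - q) m = 0.
Proof.
move=> hip hM z; have M0 : M 0 by case: hM.
pose E := [set `|z - m| ^+ 2 | m in M].
have E0 : E !=set0 by exists (`|z - 0| ^+ 2); exists 0.
have Elb : lbound E 0 by move=> _ [m _ <-]; rewrite sqr_ge0.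
have hinf : has_inf E by split => //; exists 0.
set d := inf E.
have dle m : M m -> d <= `|z - m| ^+ 2.
  by move=> Mm; apply: ge_inf; [exists 0|exists m].
have hseq n : exists m, M m /\ `|z - m| ^+ 2 < d + n.+1%:R^-1.
  have hp : (0:R) < n.+1%:R^-1 by rewrite invr_gt0 ltr0n.
  have [_ [m Mm <-] hm] := inf_adherent hp hinf.
  by exists m.
have [ms hms] := choice hseq.
have msM n : M (ms n) by case: (hms n).
(* parallelogram bound *)
have parb k n : `|ms n - ms k| ^+ 2 <= 2 * k.+1%:R^-1 + 2 * n.+1%:R^-1.
  pose mid := 2^-1 *: (ms k + ms n).
  have Mmid : M mid by apply: subZ => //; apply: subD.
  have h1 := dle _ Mmid.
  have [_ hk] := hms k; have [_ hn] := hms n.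
  have e1 : ms n - ms k = (z - ms k) - (z - ms n) by rewrite opprB [RHS]addrC addrA subrK.
  have e2 : 2 *: (z - mid) = (z - ms k) + (z - ms n).
    rewrite /mid scalerBr scalerA mulfV ?pnatr_eq0 // scale1r scaler_nat mulr2n.
    by rewrite opprD addrACA.
  have hD := normD2 hip (z - ms k) (z - ms n).
  have hB := normB2 hip (z - ms k) (z - ms n).
  rewrite -e2 normrZ ger0_norm // in hD.
  rewrite -e1 in hB.
  rewrite exprMn [2 ^+ 2]expr2 in hD.
  set A := k.+1%:R^-1 in hk *; set B := n.+1%:R^-1 in hn *; set I := ip _ _ in hD hB.
  lra.
have cau : cvg (ms @ \oo).
  apply: cauchy_cvg; apply: cauchy_exP => e e0.
  have e20 : 0 < e ^+ 2 / 4 by rewrite divr_gt0 // exprn_gt0.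
  have [N _ /(_ N)/(_ (leqnn _)) hN] := near_infty_natSinv_lt (PosNum e20).
  exists (ms N); exists N => // n /= Nn; rewrite -ball_normE /ball_ /=.
  have hb := parb N n.
  have : n.+1%:R^-1 <= N.+1%:R^-1 :> R.
    by rewrite lef_pV2 ?posrE ?ltr0n // ler_nat ltnS.
  move=> hnN; rewrite /= in hN.
  have h2 : `|ms N - ms n| ^+ 2 < e ^+ 2.
    rewrite -normrN opprB; apply: (le_lt_trans hb).
    set A := N.+1%:R^-1 in hN hnN *; set B := n.+1%:R^-1 in hnN *; set E2 := e ^+ 2 in hN *; lra.
  have := normr_ge0 (ms N - ms n); nra.
set q := lim (ms @ \oo).
have Mq : M q.
  have cM : closed M by case: hM.
  apply: (closed_cvg M cM _ _ cau); exact: nearW.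
have qmin : `|z - q| ^+ 2 <= d.
  apply/ler_addgt0Pr => e e0.
  have hd0 : 0 <= d by apply: lb_le_inf.
  pose K := Num.sqrt (d + e).
  have : closed_ball_ Num.norm z K q.
    apply: (closed_cvg _ (@closed_closed_ball_ _ _ z K) _ _ cau).
    have [N _ hN] := near_infty_natSinv_lt (PosNum e0).
    exists N => // n /= Nn; rewrite /closed_ball_ /=.
    have -> : `|z - ms n| = Num.sqrt (`|z - ms n| ^+ 2) by rewrite sqrtr_sqr normr_id.
    rewrite ler_sqrt; last lra.
    have [_ hn] := hms n; have := hN n Nn; rewrite /=; set A := n.+1%:R^-1 in hn *; lra.
  rewrite /closed_ball_ /=.
  rewrite [X in X <= _ -> _](_ : _ = Num.sqrt (`|z - q| ^+ 2)); last by rewrite sqrtr_sqr normr_id.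
  rewrite ler_sqrt //; lra.
exists q; split => // m Mm.
set g := ip (z - q) m; set N := `|m| ^+ 2.
have N0 : 0 <= N by rewrite sqr_ge0.
pose la := g / (N + 1).
have hla : la * (N + 1) = g by rewrite /la divfK //; rewrite gt_eqF //; lra.
have := dle (q + la *: m) (subD hM Mq (subZ hM la Mm)).
rewrite opprD addrA (normB2 hip) (ipZr hip) normrZ exprMn real_normK ?num_real //.
rewrite -/g -/N => h.
have : la ^+ 2 * (N + 2) <= 0 by rewrite -hla in h; nra.
move=> hh; have la0 : la = 0.
  apply/eqP; rewrite -sqrf_eq0 eq_le sqr_ge0 andbT.
  by rewrite -(pmulr_lle0 _ (_ : 0 < N + 2)) //; lra.
by rewrite -hla la0 mul0r.
Qed.

Lemma key_real (R : realType) (U d t A B rho D c s : R) :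
  0 < U -> 0 <= d -> 0 <= rho -> 0 <= D -> 0 <= c -> 0 <= s -> 0 <= t ->
  s ^+ 2 + c ^+ 2 = 1 -> `|A| <= c * U * t -> B <= d * rho ->
  rho ^+ 2 * U ^+ 2 = t ^+ 2 * U ^+ 2 - A ^+ 2 ->
  D ^+ 2 = U ^+ 2 + d ^+ 2 + t ^+ 2 - 2 * A - 2 * B ->
  s * U - c * d <= D.
Proof.
move=> U0 d0 r0 D0 c0 s0 t0 sc hA hB hr hD.
set al := A / U.
have hAal : A = al * U by rewrite /al divfK // gt_eqF.
clearbody al.
have hr2 : rho ^+ 2 = t ^+ 2 - al ^+ 2.
  apply: (mulIf (_ : U ^+ 2 != 0)); first by rewrite expf_neq0 // gt_eqF.
  by rewrite hr hAal mulrBl exprMn.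
have hD2 : (U - al) ^+ 2 + (d - rho) ^+ 2 <= D ^+ 2.
  rewrite hD hAal; nra.
have hal2 : al ^+ 2 <= c ^+ 2 * t ^+ 2.
  have hA2 : A ^+ 2 <= (c * U * t) ^+ 2.
    by rewrite -real_normK ?num_real // ler_pXn2r ?nnegrE ?normr_ge0 ?mulr_ge0 // ltW.
  rewrite hAal !exprMn in hA2.
  have U20 : 0 < U ^+ 2 by rewrite exprn_gt0.
  rewrite -(ler_pM2r U20); apply: (le_trans hA2).
  by rewrite [X in _ <= X]mulrAC.
have hsal : s * `|al| <= c * rho.
  have h1 : (s * `|al|) ^+ 2 <= (c * rho) ^+ 2.
    rewrite !exprMn real_normK ?num_real //; nra.
  by rewrite -(ler_pXn2r (_ : (0 < 2)%N)) ?nnegrE ?mulr_ge0.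
have hsal' : s * al <= c * rho.
  apply: (le_trans _ hsal); have := ler_norm al; nra.
have [hneg|hpos] := lerP (s * U - c * d) 0; first by apply: le_trans hneg _.
have hX : s * U - c * d <= s * (U - al) - c * (d - rho) by nra.
have hX2 : (s * (U - al) - c * (d - rho)) ^+ 2 <= (U - al) ^+ 2 + (d - rho) ^+ 2.
  have : (s * (U - al) - c * (d - rho)) ^+ 2 + (c * (U - al) + s * (d - rho)) ^+ 2
     = (s ^+ 2 + c ^+ 2) * ((U - al) ^+ 2 + (d - rho) ^+ 2) by ring.
  rewrite sc mul1r => <-; rewrite lerDl sqr_ge0 //.
have : (s * U - c * d) ^+ 2 <= D ^+ 2.
  apply: (le_trans _ hD2); apply: (le_trans _ hX2).
  have hXp : 0 <= s * (U - al) - c * (d - rho) by lra.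
  by rewrite ler_pXn2r ?nnegrE // ltW.
by rewrite ler_pXn2r ?nnegrE // ltW.
Qed.

Lemma fcos_facts (R : realType) (H : completeNormedModType R)
    (ip : H -> H -> R) (V1 V2 : set H) :
  is_inner_product ip -> closed_subspace V1 -> closed_subspace V2 ->
  (0 <= friedrichs_cos ip V1 V2 <= 1) /\
  forall v1 v2, V1 v1 -> orth_to ip (V1 `&` V2) v1 ->
    V2 v2 -> orth_to ip (V1 `&` V2) v2 ->
    `|ip v1 v2| <= friedrichs_cos ip V1 V2 * `|v1| * `|v2|.
Proof.
move=> hip hV1 hV2; rewrite /friedrichs_cos; set S := (X in sup X).
have Sb r : S r -> 0 <= r <= 1.
  move=> [v1 [v2 [[_ [n1 _]] [_ [n2 _]] ->]]].
  by rewrite normr_ge0 /=; have := CS hip v1 v2; rewrite n1 n2 mulr1.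
have ub : ubound S 1 by move=> r /Sb /andP[].
have key : forall v1 v2, V1 v1 -> orth_to ip (V1 `&` V2) v1 ->
    V2 v2 -> orth_to ip (V1 `&` V2) v2 ->
    v1 != 0 -> v2 != 0 -> S (`|ip v1 v2| / (`|v1| * `|v2|)).
  move=> v1 v2 V1v1 o1 V2v2 o2 n1 n2.
  have p1 : 0 < `|v1| by rewrite normr_gt0.
  have p2 : 0 < `|v2| by rewrite normr_gt0.
  exists (`|v1|^-1 *: v1); exists (`|v2|^-1 *: v2); split.
  - split; first exact: subZ.
    split; first by rewrite normrZ normfV normr_id mulVf // gt_eqF.
    by move=> m Mm; rewrite (ipZl hip) o1 // mulr0.
  - split; first exact: subZ.
    split; first by rewrite normrZ normfV normr_id mulVf // gt_eqF.
    by move=> m Mm; rewrite (ipZl hip) o2 // mulr0.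
  - rewrite (ipZl hip) (ipZr hip) !normrM !normfV !normr_id invfM.
    by rewrite mulrC -!mulrA [_ * `|ip _ _|]mulrC.
have [Sne|S0] := pselect (S !=set0); last first.
  have -> : S = set0.
    by apply/seteqP; split => x // Sx; apply: S0; exists x.
  rewrite sup0 lexx ler01; split => // v1 v2 V1v1 o1 V2v2 o2.
  have [->|n1] := eqVneq v1 0; first by rewrite (ip0l hip) !normr0 ?mulr0 ?mul0r.
  have [->|n2] := eqVneq v2 0; first by rewrite (ip0r hip) !normr0 ?mulr0 ?mul0r.
  by exfalso; apply: S0; exists (`|ip v1 v2| / (`|v1| * `|v2|)); apply: key.
have hs : has_sup S by split => //; exists 1.
have [r Sr] := Sne.
have c0 : 0 <= sup S.
  by apply: (le_trans _ (sup_upper_bound hs Sr)); case/andP: (Sb _ Sr).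
have c1 : sup S <= 1 by apply: ge_sup.
split; first by rewrite c0 c1.
move=> v1 v2 V1v1 o1 V2v2 o2.
have [->|n1] := eqVneq v1 0; first by rewrite (ip0l hip) !normr0 ?mulr0 ?mul0r.
have [->|n2] := eqVneq v2 0; first by rewrite (ip0r hip) !normr0 ?mulr0 ?mul0r.
have p1 : 0 < `|v1| by rewrite normr_gt0.
have p2 : 0 < `|v2| by rewrite normr_gt0.
have := sup_upper_bound hs (key _ _ V1v1 o1 V2v2 o2 n1 n2).
by rewrite ler_pdivrMr ?mulr_gt0 // mulrA.
Qed.

Unset Implicit Arguments.

Theorem lemma3p25 (R : realType) (H : completeNormedModType R)
    (ip : H -> H -> R) (V1 V2 : set H) (w w0 w1 : H) :
  is_inner_product ip ->
  closed_subspace V1 -> closed_subspace V2 ->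
  ~ (V1 `<=` V2) -> ~ (V2 `<=` V1) ->
  0 < friedrichs_angle ip V1 V2 ->
  is_orth_proj ip (V1 `&` V2) w w0 ->
  is_orth_proj ip V1 w w1 ->
  `|w1 - w0| <=
    (cos (friedrichs_angle ip V1 V2) * dist_to V1 w + dist_to V2 w)
      / sin (friedrichs_angle ip V1 V2).
Proof.
move=> hip hV1 hV2 _ _ hang [[M1w0 M2w0] hw0] [V1w1 hw1].
have [/andP[c0 c1] hc] := fcos_facts hip hV1 hV2.
move: hang hc c0 c1; rewrite /friedrichs_angle.
set c := friedrichs_cos ip V1 V2 => hang hc c0 c1.
have cin : c \in `[(-1), 1] by rewrite in_itv /= c1 andbT; lra.
rewrite acosK // sin_acos; last by rewrite c1 andbT; lra.
have clt1 : c < 1.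
  rewrite lt_neqAle c1 andbT; apply/eqP => ce.
  by move: hang; rewrite ce acos1 ltxx.
set s := Num.sqrt (1 - c ^+ 2).
have s0 : 0 < s by rewrite sqrtr_gt0; nra.
have s2 : s ^+ 2 = 1 - c ^+ 2 by rewrite sqr_sqrtr //; nra.
set u := w1 - w0; set a := w - w1.
have uV1 : V1 u by apply: (subB hV1).
have uM : orth_to ip (V1 `&` V2) u.
  move=> m Mm; rewrite /u (_ : w1 - w0 = (w - w0) - (w - w1)).
    by rewrite (ipBl hip) hw0 // hw1 //; [rewrite subr0 | case: Mm].
  by rewrite opprB [RHS]addrC addrA subrK.
have aV1 v : V1 v -> ip a v = 0 by move=> Vv; apply: hw1.
have au : ip a u = 0 by apply: aV1.
have ua : ip u a = 0 by rewrite (ipC hip).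
have d1 : `|a| <= dist_to V1 w.
  apply: lb_le_inf; first by exists `|w - 0|; exists 0 => //; case: hV1.
  move=> _ [v Vv <-].
  have e : w - v = a + (w1 - v) by rewrite /a addrA subrK.
  have h := normD2 hip a (w1 - v).
  rewrite -e aV1 ?mulr0 ?addr0 in h; last by apply: (subB hV1).
  have : `|a| ^+ 2 <= `|w - v| ^+ 2 by rewrite h lerDl sqr_ge0.
  by rewrite ler_pXn2r ?nnegrE.
have main x : V2 x -> s * `|u| - c * `|a| <= `|w - x|.
  move=> V2x.
  have [q [Mq hq]] := proj_exists hip (subI hV1 hV2) (x - w0).
  set z := x - w0 - q.
  have V2z : V2 z by apply: (subB hV2); [apply: (subB hV2) | case: Mq].
  have zM : orth_to ip (V1 `&` V2) z by move=> m Mm; apply: hq.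
  set y := u + a - z.
  have e : w - x = y - q.
    rewrite /y /u /a /z.
    rewrite (addrC (w1 - w0)) addrA subrK -addrA -opprD subrK.
    by rewrite opprB addrA subrK.
  have hyw : `|y| <= `|w - x|.
    have h := normB2 hip y q.
    have yq : ip y q = 0.
      rewrite /y (ipBl hip) (ipDl hip) uM // aV1 ?zM //; last by case: Mq.
      by rewrite addr0 subr0.
    rewrite yq mulr0 subr0 -e in h.
    have : `|y| ^+ 2 <= `|w - x| ^+ 2 by rewrite h lerDl sqr_ge0.
    by rewrite ler_pXn2r ?nnegrE.
  apply: le_trans hyw.
  have [u0|upos] := eqVneq `|u| 0.
    by rewrite u0 mulr0 sub0r; apply: (le_trans _ (normr_ge0 y)); rewrite oppr_le0 mulr_ge0.
  have U0 : 0 < `|u| by rewrite lt_neqAle eq_sym upos normr_ge0.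
  set A := ip u z; set B := ip a z.
  set k := A / `|u| ^+ 2.
  set e' := z - k *: u.
  have s0' : 0 <= s by apply: ltW.
  have sc : s ^+ 2 + c ^+ 2 = 1 by rewrite s2; ring.
  apply: (@key_real R `|u| `|a| `|z| A B `|e'| `|y| c s) => //.
  - by rewrite /A; apply: hc.
  - have -> : B = ip a e' by rewrite /e' (ipBr hip) (ipZr hip) au mulr0 subr0.
    by apply: le_trans (ler_norm _) (CS hip _ _).
  - rewrite /e' (normB2 hip) (ipZr hip) normrZ exprMn real_normK ?num_real //.
    rewrite (ipC hip z u) -/A /k.
    have U20 : `|u| ^+ 2 != 0 by rewrite expf_neq0 // gt_eqF.
    by field.
  - rewrite /y (normB2 hip) (normD2 hip) ua (ipDl hip) -/A -/B; ring.
have hd2 : s * `|u| - c * dist_to V1 w <= dist_to V2 w.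
  apply: lb_le_inf; first by exists `|w - 0|; exists 0 => //; case: hV2.
  move=> _ [x V2x <-]; apply: le_trans (main x V2x).
  by rewrite lerD2l lerN2 ler_wpM2l.
by rewrite ler_pdivlMr //; lra.
Qed.
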